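(* Let $\tilde L$ be a minimum-size counterexample. If $M$ is a nonempty set of meet-irreducible elements of $\tilde L$, then there exists a join-irreducible element $j$ of $\tilde L$ such that $|{\uparrow}j\cap M|>\frac{|M|}{2}$.
   Context: For a poset $P$, $x$ upper covers $y$ (and $y$ lower covers $x$) if $y<x$ with nothing strictly between. Join-irreducible: upper covers exactly one element; meet-irreducible: lower covers exactly one element. For $x\in P$, ${\uparrow}x=\{y\in P: x\le y\}$. A counterexample is a finite lattice $L$ with $|L|>1$ in which every join-irreducible $j$ satisfies $|{\uparrow}j|>|L|/2$; a minimum-size counterexample is a counterexample $\tilde L$ such that no counterexample has fewer elements. *)

(* Defs.v *)
From mathcomp Require Import all_boot all_order.
Set Implicit Arguments. Unset Strict Implicit. Unset Printing Implicit Defensive.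
Import Order.TTheory.
Local Open Scope order_scope.

Section Defs.
Context {d : Order.disp_t} {P : finPOrderType d}.

Definition covers (x y : P) : bool :=
  (y < x) && [forall z : P, ~~ ((y < z) && (z < x))].

Definition join_irr (j : P) : bool := #|[set y : P | covers j y]| == 1%N.

Definition meet_irr (m : P) : bool := #|[set y : P | covers y m]| == 1%N.

Definition upset (x : P) : {set P} := [set y : P | x <= y].

End Defs.

Definition counterexample {d : Order.disp_t} (L : finLatticeType d) : Prop :=
  (1 < #|L|)%N /\
  forall j : L, join_irr j -> (#|L| < 2 * #|upset j|)%N.

Definition min_counterexample {d : Order.disp_t} (L : finLatticeType d) : Prop :=
  counterexample L /\
  forall (d' : Order.disp_t) (L' : finLatticeType d'),
    counterexample L' -> (#|L| <= #|L'|)%N.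

(* Main.v *)
Require Import Defs.
From HB Require Import structures.
From mathcomp Require Import all_boot all_order.
From mathcomp Require Import zify.
Set Implicit Arguments. Unset Strict Implicit. Unset Printing Implicit Defensive.
Import Order.TTheory.
Local Open Scope order_scope.

Section Gen.
Context {d : Order.disp_t} {P : finPOrderType d}.

Definition btw (x y : P) := [set z | (x < z) && (z < y)].

Lemma cover_gen : forall n (x y : P), leq #|btw x y| n -> x < y ->
  (exists c, x <= c /\ covers y c) /\ (exists c, covers c x /\ c <= y).
Proof.
elim=> [|n IH] x y hn hxy.
  have hc : covers y x.
    rewrite /covers hxy /=; apply/forallP => z; apply/negP => hz.
    have hz' : z \in btw x y by rewrite inE.
    have : (0 < #|btw x y|)%N by apply/card_gt0P; exists z.
    by rewrite leqn0 in hn; rewrite (eqP hn).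
  by split; [exists x | exists y].
case: (boolP (covers y x)) => [hc|]; first by split; [exists x | exists y].
rewrite /covers hxy /= => /forallPn [z]; rewrite negbK => /andP [hxz hzy].
split.
- have hp : btw z y \proper btw x y.
    apply/properP; split.
      by apply/subsetP => w; rewrite !inE => /andP [h1 ->]; rewrite (lt_trans hxz h1).
    by exists z; rewrite !inE ?hxz ?hzy // ltxx.
  have := proper_card hp => hc.
  have [[c [h1 h2]] _] := IH z y (ltnSE (leq_trans hc hn)) hzy.
  by exists c; split => //; apply: le_trans (ltW hxz) h1.
- have hp : btw x z \proper btw x y.
    apply/properP; split.
      by apply/subsetP => w; rewrite !inE => /andP [-> h1]; rewrite (lt_trans h1 hzy).
    by exists z; rewrite !inE ?hxz ?hzy // ltxx andbF.
  have := proper_card hp => hc.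
  have [_ [c [h1 h2]]] := IH x z (ltnSE (leq_trans hc hn)) hxz.
  by exists c; split => //; apply: le_trans h2 (ltW hzy).
Qed.

Lemma down_cover (x y : P) : x < y -> exists c, x <= c /\ covers y c.
Proof. by move=> h; case: (cover_gen (leqnn _) h). Qed.
Lemma up_cover (x y : P) : x < y -> exists c, covers c x /\ c <= y.
Proof. by move=> h; case: (cover_gen (leqnn _) h). Qed.

End Gen.
Section Lat.
Context {d : Order.disp_t} {L : finLatticeType d}.

Lemma meet_irr_lt (m a b : L) : meet_irr m -> m < a -> m < b -> m < a `&` b.
Proof.
move=> /cards1P [u hu] hma hmb.
have hle : m <= a `&` b by rewrite lexI (ltW hma) (ltW hmb).
rewrite lt_neqAle hle andbT; apply/negP => /eqP hm.
have [u1 [c1 l1]] := up_cover hma.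
have [u2 [c2 l2]] := up_cover hmb.
have : u1 \in [set y | covers y m] by rewrite inE.
have : u2 \in [set y | covers y m] by rewrite inE.
rewrite hu !inE => /eqP e2 /eqP e1; subst u1 u2.
have : u <= a `&` b by rewrite lexI l1 l2.
rewrite -hm => hum.
by move: c1; rewrite /covers => /andP [/lt_le_trans /(_ hum)]; rewrite ltxx.
Qed.

Lemma has_top (x0 : L) : exists t : L, forall w, w <= t.
Proof.
pose f (t : L) := #|[set z | z <= t]|.
have [t _ ht] := @arg_maxnP L x0 xpredT f isT.
exists t => w.
have hs : [set z | z <= t] \subset [set z | z <= t `|` w].
  by apply/subsetP => z; rewrite !inE => h; rewrite (le_trans h) ?leUl.
have := ht (t `|` w) isT; rewrite /f => hle.
have he : [set z | z <= t] = [set z | z <= t `|` w] by apply/eqP; rewrite eqEcard hs; exact: hle.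
have : w \in [set z | z <= t `|` w] by rewrite inE leUr.
by rewrite -he inE.
Qed.
End Lat.

Section Sub.
Context {d : Order.disp_t} {L : finLatticeType d} (M : {set L})
  (hMirr : forall m, m \in M -> meet_irr m) (t : L) (ht : forall w, w <= t).

Definition T := {x : L | x \notin M}.
HB.instance Definition _ := [isSub of T for sval].
HB.instance Definition _ := [Finite of T by <:].
HB.instance Definition _ := [SubChoice_isSubPOrder of T by <: with d].

Lemma t_notin : t \notin M.
Proof.
apply/negP => /hMirr /cards1P [u hu].
have : u \in [set y | covers y t] by rewrite hu inE.
rewrite inE /covers => /andP [h _].
by have := lt_le_trans h (ht u); rewrite ltxx.
Qed.

Definition tT : T := Sub t t_notin.

Lemma meet_notin (x y : T) : val x `&` val y \notin M.
Proof.
apply/negP => hm.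
have hx : val x `&` val y < val x.
  rewrite lt_neqAle leIl andbT; apply/negP => /eqP e.
  by move: hm; rewrite e (negbTE (valP x)).
have hy : val x `&` val y < val y.
  rewrite lt_neqAle leIr andbT; apply/negP => /eqP e.
  by move: hm; rewrite e (negbTE (valP y)).
by have := meet_irr_lt (hMirr hm) hx hy; rewrite ltxx.
Qed.

Definition mT (x y : T) : T := Sub (val x `&` val y) (meet_notin x y).

Lemma leT (x y : T) : (x <= y) = (val x <= val y).
Proof. by []. Qed.

Lemma mT_val x y : val (mT x y) = val x `&` val y.
Proof. by rewrite /mT SubK. Qed.

Definition jT (x y : T) : T :=
  fintype.arg_min tT (fun z => (x <= z) && (y <= z)) (fun z : T => #|[set w : L | w <= val z]|).

Lemma meetP (x y z : T) : (x <= mT y z) = (x <= y) && (x <= z).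
Proof. by rewrite !leT mT_val lexI. Qed.

Lemma joinP (x y z : T) : (jT x y <= z) = (x <= z) && (y <= z).
Proof.
have htT : (x <= tT) && (y <= tT) by rewrite !leT /tT SubK !ht.
rewrite /jT; case: (@arg_minnP _ tT (fun z => (x <= z) && (y <= z)) (fun z : T => #|[set w : L | w <= val z]|) htT).
move=> j /andP [hxj hyj] hmin.
apply/idP/andP => [hjz|[hxz hyz]]; first by split; apply: le_trans hjz.
have hub : (x <= mT j z) && (y <= mT j z) by rewrite !meetP hxj hyj hxz hyz.
have := hmin _ hub => hle.
have hs : [set w : L | w <= val (mT j z)] \subset [set w : L | w <= val j].
  by apply/subsetP => w; rewrite !inE mT_val => h; rewrite (le_trans h) ?leIl.
have he : [set w : L | w <= val (mT j z)] = [set w : L | w <= val j].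
  by apply/eqP; rewrite eqEcard hs; exact: hle.
have : val j \in [set w : L | w <= val (mT j z)] by rewrite he inE.
by rewrite inE mT_val lexI => /andP [].
Qed.

HB.instance Definition _ := Order.POrder_MeetJoin_isLattice.Build d T meetP joinP.


Definition TL : finLatticeType d := T.

Lemma cardT : #|TL| = (#|L| - #|M|)%N.
Proof.
rewrite card_sub -(cardsC M) addKn.
by apply: eq_card => w; rewrite !inE.
Qed.

Lemma card_predT (p : pred L) :
  #|[set y : T | p (val y)]| = #|[set w : L | p w && (w \notin M)]|.
Proof.
have e : [set val y | y in [set y : T | p (val y)]] = [set w : L | p w && (w \notin M)].
  apply/setP => w; rewrite [RHS]inE.
  apply/imsetP/andP => [[y]|[hp hw]].
  by rewrite inE => hp ->; split => //; exact: (valP y).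
by exists (Sub w hw : T); rewrite ?inE SubK.
by rewrite -e card_imset //; exact: val_inj.
Qed.

Lemma T_ji (j' : T) : join_irr j' ->
  exists j : L, join_irr j /\ forall w, w \notin M -> (j <= w) = (val j' <= w).
Proof.
move=> /cards1P [k' hk'].
have : k' \in [set y | covers j' y] by rewrite hk' set11.
rewrite inE => hkj.
have hk : forall y' : T, y' < j' -> y' <= k'.
  move=> y' /down_cover [c [hyc hc]].
  have : c \in [set y | covers j' y] by rewrite inE.
  by rewrite hk' inE => /eqP <-.
have hkj' : val k' < val j' by move: hkj => /andP [].
pose Q (z : L) := [forall w : L, (w \notin M) ==> ((z <= w) == (val j' <= w))].
have hQ0 : Q (val j') by apply/forallP => w; apply/implyP => _; rewrite eqxx.
case: (@arg_minnP L (val j') Q (fun z : L => #|[set u | u <= z]|) hQ0) => j hQ hmin.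
have hQ' : forall w, w \notin M -> (j <= w) = (val j' <= w).
  by move=> w hw; move/forallP: hQ => /(_ w); rewrite hw /= => /eqP.
have hjj : j <= val j' by rewrite hQ' ?(valP j').
have hbelow : forall a, a < j -> a <= val k'.
  move=> a haj.
  have hQa : ~~ Q a.
    apply/negP => /hmin; apply/negP; rewrite -ltnNge.
    apply: proper_card; apply/properP; split.
      by apply/subsetP => u; rewrite !inE => h; apply: le_trans h (ltW haj).
    exists j; rewrite !inE; first exact: lexx.
    by apply/negP => h; move: (lt_le_trans haj h); rewrite ltxx.
  move/forallPn: hQa => [w]; rewrite negb_imply => /andP [hw hne].
  case hjw: (val j' <= w).
    have hjw' : j <= w by rewrite hQ'.
    by rewrite hjw (le_trans (ltW haj) hjw') in hne.
  have haw : a <= w by move: hne; rewrite hjw; case: (a <= w).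
  pose wT : T := Sub w hw.
  have hwT : val wT = w by rewrite /wT SubK.
  have hm : mT j' wT < j'.
    rewrite lt_neqAle leT mT_val leIl andbT; apply/negP => /eqP e.
    have : val (mT j' wT) = val j' by rewrite e.
    by rewrite mT_val hwT => /meet_idPl; rewrite hjw.
  have := hk _ hm; rewrite leT mT_val hwT; apply: le_trans.
  by rewrite lexI haw (le_trans (ltW haj) hjj).
have hjk : ~~ (j <= val k').
  apply/negP; rewrite hQ'; last exact: (valP k'). move=> h.
  by have := lt_le_trans hkj' h; rewrite ltxx.
have hlt : j `&` val k' < j.
  rewrite lt_neqAle leIl andbT; apply/negP => /eqP /meet_idPl.
  by rewrite (negbTE hjk).
have [c [hc1 hc2]] := down_cover hlt.
exists j; split => //.
apply/cards1P; exists c; apply/setP => b; rewrite !inE; apply/idP/eqP => [hb|->//].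
have hbj : b < j by move: hb => /andP [].
have hbc : b <= c by apply: le_trans hc1; rewrite lexI (ltW hbj) hbelow.
move: hbc; rewrite le_eqVlt => /orP [/eqP // | hbc'].
have hcj : c < j by move: hc2 => /andP [].
by move: hb => /andP [_ /forallP /(_ c)]; rewrite hbc' hcj.
Qed.


Lemma sub_contra (hL : counterexample L)
  (hmin : forall (d' : Order.disp_t) (L' : finLatticeType d'), counterexample L' -> (#|L| <= #|L'|)%N)
  (hM0 : M != set0)
  (H : forall j : L, join_irr j -> (2 * #|upset j :&: M| <= #|M|)%N) : False.
Proof.
have hM : (0 < #|M|)%N by rewrite card_gt0.
have hML : (#|M| <= #|L|)%N by apply: max_card.
case: (ltnP 1 #|TL|) => hT.
  have hc : counterexample TL.
    split => // j' hj'.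
    have [j [hj hjw]] := T_ji hj'.
    have e1 : #|upset j'| = #|upset j :\: M|.
      have -> : upset j' = [set y : T | val j' <= val y] by apply/setP => y; rewrite !inE.
      rewrite (card_predT (fun w => val j' <= w)); apply: eq_card => w; rewrite !inE.
      by case hw: (w \in M) => /=; [rewrite !andbF | rewrite !andbT hjw ?hw].
    rewrite cardsD in e1.
    have h1 := hL.2 j hj.
    have h2 := H j hj.
    have h3 : (#|upset j :&: M| <= #|upset j|)%N by apply: subset_leq_card; apply: subsetIl.
    rewrite e1 cardT; lia.
  have := hmin _ _ hc; rewrite cardT; lia.
have hall : forall w, w \notin M -> w = t.
  move=> w hw; apply/eqP; apply/negP => hne.
  have : (#|[set (Sub w hw : TL); tT]| <= #|TL|)%N by apply: max_card.
  rewrite cards2.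
  have -> : (Sub w hw : TL) != tT.
    by apply/negP => /eqP /(congr1 val); rewrite /tT !SubK => e; rewrite e eqxx in hne.
  move=> h; lia.
have [x [y [_ _ hxy]]] := card_gt1P hL.1.
have [a hat] : exists a, a < t.
  case hx: (x == t).
    exists y; rewrite lt_neqAle ht andbT.
    by move/eqP: hx => hx'; rewrite -hx' eq_sym.
  by exists x; rewrite lt_neqAle ht andbT hx.
have [c [_ hc]] := down_cover hat.
have hct : c < t by move: hc => /andP [].
have inM : forall b, b < t -> b \in M.
  move=> b hb; apply/negP => /negP hbM; move: (hall _ hbM) hb => ->; by rewrite ltxx.
have hjt : join_irr t.
  apply/cards1P; exists c; apply/setP => b; rewrite !inE; apply/idP/eqP => [hb|->//].
  case: (eqVneq b c) => // hbc.
  have hbt : b < t by move: hb => /andP [].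
  have hmb : b `&` c < b.
    rewrite lt_neqAle leIl andbT; apply/negP => /eqP /meet_idPl hbc'.
    have hbc2 : b < c by rewrite lt_neqAle hbc hbc'.
    by move: hb => /andP [_ /forallP /(_ c)]; rewrite hbc2 hct.
  have hmc : b `&` c < c.
    rewrite lt_neqAle leIr andbT; apply/negP => /eqP /meet_idPr hbc'.
    have hbc2 : c < b by rewrite lt_neqAle eq_sym hbc hbc'.
    by move: hc => /andP [_ /forallP /(_ b)]; rewrite hbc2 hbt.
  have hmM : b `&` c \in M by apply: inM; apply: lt_trans hmb hbt.
  by have := meet_irr_lt (hMirr hmM) hmb hmc; rewrite ltxx.
have := hL.2 t hjt.
have -> : upset t = [set t].
  apply/setP => w; rewrite !inE; apply/idP/eqP => [h|->//].
  by apply: le_anti; rewrite h ht.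
rewrite cards1 => h; have := hL.1; lia.
Qed.

End Sub.

Theorem theorem2p9 (d : Order.disp_t) (L : finLatticeType d)
  (hmin : min_counterexample L) (M : {set L})
  (hM0 : M != set0) (hMirr : forall m, m \in M -> meet_irr m) :
  exists j : L, join_irr j /\ (#|M| < 2 * #|upset j :&: M|)%N.
Proof.
case: hmin => hL hmin.
have [x0 _] : exists x : L, x \in L.
  by apply/card_gt0P; apply: leq_trans (hL.1); done.
have [t ht] := has_top x0.
case: (boolP [exists j : L, join_irr j && (#|M| < 2 * #|upset j :&: M|)%N]).
  by move/existsP => [j /andP [hj hlt]]; exists j.
move/existsPn => H; exfalso.
apply: (sub_contra hMirr ht hL hmin hM0) => j hj.
by move: (H j); rewrite hj /= -leqNgt.
Qed.
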